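(* Let $\tau$ be a veering triangulation of $M$ with dual graph $\Gamma$. If two directed cycles $c_1,c_2$ in $\Gamma$ are freely homotopic in $M$, then the number of anti-branching turns of $c_1$ and the number of anti-branching turns of $c_2$ have the same parity.
   Context: $\tau$ is a veering triangulation of $M$ (taut ideal triangulation with cooriented faces, each tetrahedron having two bottom and two top faces, a bottom edge, a top edge and four side edges, angle sum $2\pi$ around edges, with a consistent right/left veer on edges modelled on a thickened rhombus whose side edges of positive slope are right-veering and of negative slope left-veering). The dual graph $\Gamma$ has a vertex in the interior of each tetrahedron and, for each face, a directed edge crossing that face from the tetrahedron for which it is a top face to the tetrahedron for which it is a bottom face; it is embedded in $M$. For a bottom face $f$ of a tetrahedron $t$, let $A(f)$ be the top face of $t$ meeting $f$ along the edge of $t$ whose veer equals that of the top edge of $t$. A directed cycle in $\Gamma$ passing through a tetrahedron $t$ enters through a bottom face $f$ and exits through a top face $f'$; this turn (at the vertex of $t$) is anti-branching if $f'=A(f)$ and branching otherwise. Turns are counted cyclically around the cycle. *)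

(* Defs.v *)
From Stdlib Require Import Relations.
From mathcomp Require Import all_boot all_fingroup.

Set Implicit Arguments.
Unset Strict Implicit.
Unset Printing Implicit Defensive.

(* Tetrahedra form a finite type T; each tetrahedron has vertex labels      *)
(* 'I_4 = {0,1,2,3}.  Face slot i of t is the face opposite vertex i.       *)
(* The gluing of face slot i of t is given by gt t i (the tetrahedron on    *)
(* the other side) and gp t i (the vertex bijection, sending the face i of  *)
(* t onto the face (gp t i i) of (gt t i)).                                 *)
(* Taut/veering labelling convention: in every tetrahedron the bottom edge  *)
(* is {0,2} and the top edge is {1,3}; hence the bottom faces are the faces *)
(* opposite 1 and 3, the top faces those opposite 0 and 2; the side edges   *)
(* are 01, 12, 23, 30 (the vertices 0,1,2,3 run around the square seen     *)
(* from above, with a fixed handedness, tetrahedra positively oriented).    *)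

Definition l0 : 'I_4 := inord 0.
Definition l1 : 'I_4 := inord 1.
Definition l2 : 'I_4 := inord 2.
Definition l3 : 'I_4 := inord 3.

Definition topslot (i : 'I_4) : bool := (val i == 0) || (val i == 2).

(* the edge slot e (ordered pair of labels) is a diagonal (top or bottom)   *)
(* edge, i.e. carries dihedral angle pi in the taut structure               *)
Definition diagonal (e : 'I_4 * 'I_4) : bool :=
  ([set e.1; e.2] == [set l0; l2]) || ([set e.1; e.2] == [set l1; l3]).

Section Tri.
Variable T : finType.
Variable gt : T -> 'I_4 -> T.
Variable gp : T -> 'I_4 -> {perm 'I_4}.
Variable veer : T -> {set 'I_4} -> bool. (* true = right-veering *)

Definition edge_step : rel (T * ('I_4 * 'I_4)) := fun x y =>
  [exists i : 'I_4, [&& i != x.2.1, i != x.2.2, y.1 == gt x.1 i,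
                        y.2.1 == gp x.1 i x.2.1 & y.2.2 == gp x.1 i x.2.2]].

(* tau is a veering triangulation of the oriented 3-manifold M obtained by  *)
(* gluing the (ideal) tetrahedra                                            *)
Record is_veering : Prop := {
  glue_invol : forall t i,
    gt (gt t i) (gp t i i) = t /\ gp (gt t i) (gp t i i) = (gp t i)^-1%g;
  (* coorientations: each face is a top face of one tetrahedron and a bottom *)
  (* face of the other                                                      *)
  glue_coor : forall t i, topslot (gp t i i) = ~~ topslot i;
  (* M is oriented and all tetrahedra are positively labelled *)
  glue_orient : forall t i, odd_perm (gp t i);
  (* no edge is identified with itself in reverse (M is a manifold) *)
  edge_manifold : forall t (a b : 'I_4), a != b ->
    ~~ connect edge_step (t, (a, b)) (t, (b, a));
  (* angle sum 2 pi around every edge: exactly two pi-angles *)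
  edge_angle : forall t (a b : 'I_4), a != b ->
    #|[set y | connect edge_step (t, (a, b)) y & diagonal y.2]| = 2;
  (* the veer is a function of the edges of tau *)
  veer_glue : forall t i (a b : 'I_4), a != i -> b != i ->
    veer (gt t i) [set gp t i a; gp t i b] = veer t [set a; b];
  (* side edges: positive slope (01, 23) right, negative slope (12, 30) left *)
  veer_sides : forall t,
    [/\ veer t [set l0; l1], veer t [set l2; l3],
        ~~ veer t [set l1; l2] & ~~ veer t [set l3; l0]]
}.

(* Paths.  A step (t, i) leaves the tetrahedron t through its face slot i   *)
(* (i.e. crosses an edge of the dual graph Gamma, forwards if i is a top    *)
(* slot, backwards otherwise).  A closed path is a base tetrahedron v with  *)
(* a sequence of consecutive steps returning to v.                          *)

Fixpoint walk (v : T) (s : seq (T * 'I_4)) : option T :=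
  match s with
  | [::] => Some v
  | x :: s' => if x.1 == v then walk (gt x.1 x.2) s' else None
  end.

Definition closed_path (c : T * seq (T * 'I_4)) : bool :=
  walk c.1 c.2 == Some c.1.

(* directed cycle in Gamma: nonempty closed path all of whose steps go      *)
(* through top faces, i.e. follow the direction of the edges of Gamma       *)
Definition directed_cycle (c : T * seq (T * 'I_4)) : bool :=
  [&& c.2 != [::], all (fun x => topslot x.2) c.2 & closed_path c].

Definition inv_step (x : T * 'I_4) : T * 'I_4 := (gt x.1 x.2, gp x.1 x.2 x.2).

(* 2-cells of the dual 2-complex (a spine of M): one for each edge of tau,  *)
(* attached along the cycle of faces around that edge.  A flag (t,a,b,c)    *)
(* is the edge {a,b} of t together with the face c of t (c not in {a,b})    *)
(* through which one leaves t while turning around that edge.              *)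
Definition third (x y z : 'I_4) : 'I_4 := inord (6 - (x + y + z)).

Definition flagnext (f : T * 'I_4 * 'I_4 * 'I_4) : T * 'I_4 * 'I_4 * 'I_4 :=
  let: (t, a, b, c) := f in
  let p := gp t c in (gt t c, p a, p b, third (p a) (p b) (p c)).

Definition valid_flag (f : T * 'I_4 * 'I_4 * 'I_4) : bool :=
  let: (t, a, b, c) := f in [&& a != b, a != c & b != c].

(* boundary word of the 2-cell around the edge of the flag f, read from f *)
Definition relator (f : T * 'I_4 * 'I_4 * 'I_4) : seq (T * 'I_4) :=
  [seq (g.1.1.1, g.2) | g <- fingraph.orbit flagnext f].

(* elementary moves of free homotopy of closed edge paths in the dual       *)
(* 2-complex: cyclic rotation, cancelling a backtrack, cancelling the       *)
(* boundary of a 2-cell                                                     *)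
Definition hmove (p q : T * seq (T * 'I_4)) : Prop :=
  (exists x s, p = (x.1, x :: s) /\ q = (gt x.1 x.2, rcons s x))
  \/ (exists s1 s2 x, p.1 = q.1 /\ p.2 = s1 ++ x :: inv_step x :: s2
                      /\ q.2 = s1 ++ s2)
  \/ (exists s1 s2 f, valid_flag f /\ p.1 = q.1
                      /\ p.2 = s1 ++ relator f ++ s2 /\ q.2 = s1 ++ s2).

Definition hstep (p q : T * seq (T * 'I_4)) : Prop :=
  [/\ closed_path p, closed_path q & hmove p q].

Definition free_homotopic (p q : T * seq (T * 'I_4)) : Prop :=
  clos_refl_sym_trans _ hstep p q.

(* A(f) for the bottom face slot i of t: the top face of t meeting face i  *)
(* along the (side) edge whose veer equals the veer of the top edge {1,3}.  *)
(* The top face opposite 0 meets face i along the edge ~: {i,0}.            *)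
Definition Aface (t : T) (i : 'I_4) : 'I_4 :=
  if veer t (~: [set i; l0]) == veer t [set l1; l3] then l0 else l2.

(* turn at the tetrahedron y.1 between consecutive steps x, y of a directed *)
(* cycle: enter through the bottom face gp x.1 x.2 x.2, exit through y.2    *)
Definition antibranching (x y : T * 'I_4) : bool :=
  y.2 == Aface y.1 (gp x.1 x.2 x.2).

Definition n_antibranching (s : seq (T * 'I_4)) : nat :=
  count (fun xy => antibranching xy.1 xy.2) (zip s (rot 1 s)).

End Tri.

(* Main.v *)
Require Import Defs.
From Stdlib Require Import Relations.
From mathcomp Require Import all_boot all_fingroup.

Set Implicit Arguments.
Unset Strict Implicit.
Unset Printing Implicit Defensive.

Definition I4 := iota 0 4.
Definition B2 := [:: true; false].
Definition d13 (a b : nat) := ((a == 1) && (b == 3)) || ((a == 3) && (b == 1)).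
Definition d02 (a b : nat) := ((a == 0) && (b == 2)) || ((a == 2) && (b == 0)).
Definition vrn (vt vb : bool) (a b : nat) : bool :=
  if d13 a b then vt else if d02 a b then vb else
  [|| (a == 0) && (b == 1), (a == 1) && (b == 0), (a == 2) && (b == 3) | (a == 3) && (b == 2)].
Definition topn (i : nat) := (i == 0) || (i == 2).
Definition sign (vt : bool) (i : nat) := (i == 3) || (i == if vt then 0 else 2).
Definition rhon vt vb c a b := if topn c then ~~ (d13 a b || d02 a b) && (vrn vt vb a b == vt) else d02 a b.
Definition dist3 (a b c : nat) := [&& a != b, a != c & b != c].
Definition C_third := all (fun x => all (fun y => all (fun z => dist3 x y z ==>
   let w := 6 - (x + y + z) in [&& w < 4, w != x, w != y, w != z & 6 - (x + y + w) == z]) I4) I4) I4.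
Lemma C_third_ok : C_third. Proof. by vm_compute. Qed.
Definition invn a0 a1 a2 a3 := odd ((a1 < a0) + (a2 < a0) + (a3 < a0) + (a2 < a1) + (a3 < a1) + (a3 < a2)).
Definition sel (a0 a1 a2 a3 j : nat) := nth 0 [:: a0; a1; a2; a3] j.
Definition tp (x y j : nat) := if j == x then y else if j == y then x else j.
Definition distinct4 (a0 a1 a2 a3 : nat) := uniq [:: a0; a1; a2; a3].
Definition C_inv := all (fun a0 => all (fun a1 => all (fun a2 => all (fun a3 => all (fun x => all (fun y =>
  distinct4 a0 a1 a2 a3 ==> (x != y) ==>
  (invn (sel a0 a1 a2 a3 (tp x y 0)) (sel a0 a1 a2 a3 (tp x y 1)) (sel a0 a1 a2 a3 (tp x y 2)) (sel a0 a1 a2 a3 (tp x y 3)) == ~~ invn a0 a1 a2 a3)) I4) I4) I4) I4) I4) I4.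
Lemma C_inv_ok : C_inv. Proof. by vm_compute. Qed.
Definition C_face := all (fun a0 => all (fun a1 => all (fun a2 => all (fun a3 =>
  let p := sel a0 a1 a2 a3 in
  distinct4 a0 a1 a2 a3 ==> invn a0 a1 a2 a3 ==>
  all (fun c => topn c ==> ~~ topn (p c) ==>
  all (fun vt => all (fun vb => all (fun vt' => all (fun vb' =>
    all (fun x => all (fun y => [&& x != y, x != c & y != c] ==> (vrn vt' vb' (p x) (p y) == vrn vt vb x y)) I4) I4 ==>
    all (fun a => all (fun b => dist3 a b c ==>
       ((~~ (d13 a b || d02 a b) && (vrn vt vb a b == vt)) == d02 (p a) (p b))) I4) I4) B2) B2) B2) B2) I4) I4) I4) I4) I4.
Lemma C_face_ok : C_face. Proof. by vm_compute. Qed.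
Definition C_F1 := all (fun a => all (fun b => all (fun c => dist3 a b c ==>
  let d := 6 - (a + b + c) in all (fun vt => all (fun vb =>
  (sign vt c (+) sign vt d) == (rhon vt vb c a b (+) rhon vt vb d a b (+) true (+) topn c (+) topn d)) B2) B2) I4) I4) I4.
Lemma C_F1_ok : C_F1. Proof. by vm_compute. Qed.
Definition C_anti := all (fun i => all (fun o => all (fun vt => (~~ topn i) ==> (i < 4) ==> topn o ==>
  ((o == if (i == 1) == vt then 0 else 2) == (sign vt i (+) sign vt o))) B2) I4) I4.
Lemma C_anti_ok : C_anti. Proof. by vm_compute. Qed.

Lemma inI4 (k : 'I_4) : nat_of_ord k \in I4.
Proof. by rewrite mem_iota /=. Qed.
Lemma inB2 (b : bool) : b \in B2.
Proof. by case: b. Qed.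

Lemma vl0 : nat_of_ord l0 = 0. Proof. by rewrite /l0 inordK. Qed.
Lemma vl1 : nat_of_ord l1 = 1. Proof. by rewrite /l1 inordK. Qed.
Lemma vl2 : nat_of_ord l2 = 2. Proof. by rewrite /l2 inordK. Qed.
Lemma vl3 : nat_of_ord l3 = 3. Proof. by rewrite /l3 inordK. Qed.

Lemma ord4 (k : 'I_4) : [\/ k = l0, k = l1, k = l2 | k = l3].
Proof.
case: k => [[|[|[|[|m]]]] Hm]; [apply: Or41|apply: Or42|apply: Or43|apply: Or44|by []];
  apply: val_inj; rewrite /= ?vl0 ?vl1 ?vl2 ?vl3 //.
Qed.

Lemma third_spec (x y z : 'I_4) : dist3 x y z ->
  [/\ nat_of_ord (third x y z) = 6 - (x + y + z), third x y z != x, third x y z != y,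
      third x y z != z & third x y (third x y z) = z].
Proof.
move=> D; have := allP C_third_ok _ (inI4 x) => /allP/(_ _ (inI4 y)) /allP/(_ _ (inI4 z)) /implyP/(_ D) /=.
case/and5P => w4 nx ny nz e.
have tv : nat_of_ord (third x y z) = 6 - (x + y + z) by rewrite /third inordK.
split => //; try by rewrite -val_eqE /= tv.
apply: val_inj; rewrite /= [in LHS]/third inordK tv ?(eqP e) //.
Qed.

Lemma tperm_val (x y z : 'I_4) : nat_of_ord (tperm x y z) = tp x y z.
Proof.
rewrite /tp !val_eqE; case: (eqVneq z x) => [->|nzx]; first by rewrite tpermL.
case: (eqVneq z y) => [->|nzy]; first by rewrite tpermR.
by rewrite tpermD // eq_sym.
Qed.

Lemma sel_val (s : 'I_4 -> 'I_4) (k : 'I_4) :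
  nat_of_ord (s k) = sel (s l0) (s l1) (s l2) (s l3) k.
Proof. by case: (ord4 k) => ->; rewrite ?vl0 ?vl1 ?vl2 ?vl3. Qed.

Lemma ordeqE (a b : 'I_4) : (nat_of_ord a == nat_of_ord b) = (a == b).
Proof. by []. Qed.

Lemma dist4I (a0 a1 a2 a3 : nat) : a0 != a1 -> a0 != a2 -> a0 != a3 -> a1 != a2 -> a1 != a3 -> a2 != a3 ->
  distinct4 a0 a1 a2 a3.
Proof. move=> h1 h2 h3 h4 h5 h6; rewrite /distinct4 /= !inE !negb_or h1 h2 h3 h4 h5 h6. by []. Qed.

Lemma perm_neq (s : {perm 'I_4}) (a b : 'I_4) : a != b -> nat_of_ord (s a) != nat_of_ord (s b).
Proof. by rewrite ordeqE (inj_eq perm_inj). Qed.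

Lemma perm_neqo (s : {perm 'I_4}) (a b : 'I_4) : a != b -> s a != s b.
Proof. by move=> h; have := perm_neq s h. Qed.

Lemma perm_distinct (s : {perm 'I_4}) : distinct4 (s l0) (s l1) (s l2) (s l3).
Proof.
by apply: dist4I; apply: perm_neq; rewrite -ordeqE ?vl0 ?vl1 ?vl2 ?vl3.
Qed.

Lemma odd_perm_invn (s : {perm 'I_4}) :
  odd_perm s = invn (s l0) (s l1) (s l2) (s l3).
Proof.
case: (prod_tpermP s) => ts -> {s}.
elim: ts => [|[x y] ts IH] /=.
  by rewrite big_nil odd_perm1 !perm1 vl0 vl1 vl2 vl3.
rewrite big_cons => /andP [dxy dts].
rewrite odd_permM odd_tperm dxy IH //.
set s' := (\prod_(_ <- _) _)%g.
rewrite !permM !(sel_val s' (tperm _ _ _)) !tperm_val vl0 vl1 vl2 vl3.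
have := allP C_inv_ok _ (inI4 (s' l0)) => /allP/(_ _ (inI4 (s' l1))) /allP/(_ _ (inI4 (s' l2)))
  /allP/(_ _ (inI4 (s' l3))) /allP/(_ _ (inI4 x)) /allP/(_ _ (inI4 y)).
by rewrite perm_distinct /= val_eqE dxy /= => /eqP ->.
Qed.

Lemma veer_vr (T : finType) (gt : T -> 'I_4 -> T) (gp : T -> 'I_4 -> {perm 'I_4})
  (veer : T -> {set 'I_4} -> bool) (tau : is_veering gt gp veer) t (a b : 'I_4) :
  a != b -> veer t [set a; b] = vrn (veer t [set l1; l3]) (veer t [set l0; l2]) a b.
Proof.
case: (veer_sides tau t) => h01 h23 h12 h30.
case: (ord4 a) => ->; case: (ord4 b) => -> ab; try by rewrite eqxx in ab.
all: rewrite /vrn /d13 /d02 ?vl0 ?vl1 ?vl2 ?vl3 /=.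
all: rewrite ?h01 ?h23 ?(negbTE h12) ?(negbTE h30) //.
all: rewrite setUC ?h01 ?h23 ?(negbTE h12) ?(negbTE h30) //.
Qed.

Definition vtop (T : finType) (veer : T -> {set 'I_4} -> bool) t := veer t [set l1; l3].
Definition vbot (T : finType) (veer : T -> {set 'I_4} -> bool) t := veer t [set l0; l2].
Definition sigt (T : finType) (veer : T -> {set 'I_4} -> bool) t (i : 'I_4) := sign (vtop veer t) i.
Definition rhot (T : finType) (veer : T -> {set 'I_4} -> bool) t (c a b : 'I_4) :=
  rhon (vtop veer t) (vbot veer t) c a b.

Lemma face_top (T : finType) (gt : T -> 'I_4 -> T) (gp : T -> 'I_4 -> {perm 'I_4})
  (veer : T -> {set 'I_4} -> bool) (tau : is_veering gt gp veer) t (c a b : 'I_4) :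
  topslot c -> dist3 a b c ->
  rhot veer t c a b = rhot veer (gt t c) (gp t c c) (gp t c a) (gp t c b).
Proof.
move=> tc D.
have ptop : ~~ topn (gp t c c) by have := glue_coor tau t c; rewrite /topslot /topn => ->; rewrite negbK.
have := allP C_face_ok _ (inI4 (gp t c l0)) => /allP/(_ _ (inI4 (gp t c l1)))
  /allP/(_ _ (inI4 (gp t c l2))) /allP/(_ _ (inI4 (gp t c l3))).
have hinv : invn (gp t c l0) (gp t c l1) (gp t c l2) (gp t c l3).
  by rewrite -odd_perm_invn (glue_orient tau t c).
cbv beta zeta. move/implyP/(_ (perm_distinct _))/implyP/(_ hinv).
move=> /allP/(_ _ (inI4 c)). rewrite -!(sel_val (gp t c)).
move/implyP/(_ tc)/implyP/(_ ptop).
move=> /allP/(_ _ (inB2 (vtop veer t))) /allP/(_ _ (inB2 (vbot veer t)))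
        /allP/(_ _ (inB2 (vtop veer (gt t c)))) /allP/(_ _ (inB2 (vbot veer (gt t c)))).
move=> /implyP H.
have {H} : all (fun a => all (fun b => dist3 a b c ==>
       ((~~ (d13 a b || d02 a b) && (vrn (vtop veer t) (vbot veer t) a b == vtop veer t)) ==
        d02 (sel (gp t c l0) (gp t c l1) (gp t c l2) (gp t c l3) a)
            (sel (gp t c l0) (gp t c l1) (gp t c l2) (gp t c l3) b))) I4) I4.
  apply: H; apply/allP => x xI; apply/allP => y yI; apply/implyP => /and3P [xy xc yc].
  have x4 : x < 4 by rewrite mem_iota in xI.
  have y4 : y < 4 by rewrite mem_iota in yI.
  pose X := Ordinal x4; pose Y := Ordinal y4.
  have XY : X != Y by [].
  have Xc : X != c by [].
  have Yc : Y != c by [].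
  have -> : x = X by [].
  have -> : y = Y by [].
  rewrite -!(sel_val (gp t c)).
  have := veer_glue tau t Xc Yc.
  rewrite (veer_vr tau _ XY) (veer_vr tau (gt t c) (perm_neqo (gp t c) XY)).
  by rewrite /vtop /vbot => ->.
move=> /allP/(_ _ (inI4 a)) /allP/(_ _ (inI4 b)) /implyP/(_ D).
rewrite -!(sel_val (gp t c)) /rhot /rhon.
have tc' : topn c by [].
rewrite tc' (negbTE ptop).
by move/eqP.
Qed.

Lemma face_all (T : finType) (gt : T -> 'I_4 -> T) (gp : T -> 'I_4 -> {perm 'I_4})
  (veer : T -> {set 'I_4} -> bool) (tau : is_veering gt gp veer) t (c a b : 'I_4) :
  dist3 a b c ->
  rhot veer t c a b = rhot veer (gt t c) (gp t c c) (gp t c a) (gp t c b).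
Proof.
move=> D; case tc: (topslot c); first exact: face_top.
have tc' : topslot (gp t c c) by rewrite (glue_coor tau t c) tc.
case/and3P: D => ab ac bc.
have D' : dist3 (gp t c a) (gp t c b) (gp t c c).
  by rewrite /dist3 !perm_neq.
rewrite (face_top tau (gt t c) tc' D').
case: (glue_invol tau t c) => -> ->.
by rewrite !permK.
Qed.

Definition Kf (T : finType) (veer : T -> {set 'I_4} -> bool) (g : T * 'I_4 * 'I_4 * 'I_4) : bool :=
  let: (t, a, b, c) := g in sigt veer t c (+) rhot veer t c a b (+) topslot c.

Definition hst (T : finType) (gt : T -> 'I_4 -> T) (gp : T -> 'I_4 -> {perm 'I_4})
  (veer : T -> {set 'I_4} -> bool) (x : T * 'I_4) : bool :=
  sigt veer x.1 x.2 (+) sigt veer (gt x.1 x.2) (gp x.1 x.2 x.2).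

Lemma flag_id (T : finType) (gt : T -> 'I_4 -> T) (gp : T -> 'I_4 -> {perm 'I_4})
  (veer : T -> {set 'I_4} -> bool) (tau : is_veering gt gp veer) g :
  valid_flag g -> hst gt gp veer (g.1.1.1, g.2) = Kf veer g (+) Kf veer (flagnext gt gp g).
Proof.
case: g => [[[t a] b] c] /= /and3P [ab ac bc].
have D : dist3 a b c by rewrite /dist3 ab ac bc.
have D' : dist3 (gp t c a) (gp t c b) (gp t c c) by rewrite /dist3 !perm_neq.
have [cv n1 n2 n3 inv] := third_spec D'.
set c' := third _ _ _ in cv n1 n2 n3 inv *.
have D2 : dist3 (gp t c a) (gp t c b) c'.
  by rewrite /dist3 perm_neq // eq_sym n1 eq_sym n2.
have [cv2 _ _ _ _] := third_spec D2.
have := allP C_F1_ok _ (inI4 (gp t c a)) => /allP/(_ _ (inI4 (gp t c b))) /allP/(_ _ (inI4 c')).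
move/implyP/(_ D2). cbv zeta.
rewrite -cv2 inv.
move=> /allP/(_ _ (inB2 (vtop veer (gt t c)))) /allP/(_ _ (inB2 (vbot veer (gt t c)))) /eqP F1.
have F2 := face_all tau t D.
have F3 := glue_coor tau t c.
rewrite /hst /= /sigt /rhot in F2 *.
rewrite F2.
change (topn c') with (topslot c') in F1.
change (topn (gp t c c)) with (topslot (gp t c c)) in F1.
move: F1 F3.
case: (sign (vtop veer t) c); case: (sign (vtop veer (gt t c)) (gp t c c));
case: (sign (vtop veer (gt t c)) c');
case: (rhon (vtop veer (gt t c)) (vbot veer (gt t c)) (gp t c c) (gp t c a) (gp t c b));
case: (rhon (vtop veer (gt t c)) (vbot veer (gt t c)) c' (gp t c a) (gp t c b));
case: (topslot c'); case: (topslot (gp t c c)); case: (topslot c) => //.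
Qed.

Lemma count_xor (A : Type) (p q : pred A) s :
  odd (count (fun x => p x (+) q x) s) = odd (count p s) (+) odd (count q s).
Proof.
elim: s => //= x s IH; rewrite !oddD !oddb IH.
by case: (p x); case: (q x); case: (odd (count p s)); case: (odd (count q s)).
Qed.

Lemma map_traject (A : Type) (f : A -> A) x n : map f (traject f x n) = traject f (f x) n.
Proof. by elim: n x => //= n IH x; rewrite IH. Qed.

Lemma valid_next (T : finType) (gt : T -> 'I_4 -> T) (gp : T -> 'I_4 -> {perm 'I_4}) g :
  valid_flag g -> valid_flag (flagnext gt gp g).
Proof.
case: g => [[[t a] b] c] /= /and3P [ab ac bc].
have D' : dist3 (gp t c a) (gp t c b) (gp t c c) by rewrite /dist3 !perm_neq.
have [_ n1 n2 _ _] := third_spec D'.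
by rewrite perm_neqo // eq_sym n1 eq_sym n2.
Qed.

Lemma next_inj (T : finType) (gt : T -> 'I_4 -> T) (gp : T -> 'I_4 -> {perm 'I_4})
  (veer : T -> {set 'I_4} -> bool) (tau : is_veering gt gp veer) g1 g2 :
  valid_flag g1 -> valid_flag g2 -> flagnext gt gp g1 = flagnext gt gp g2 -> g1 = g2.
Proof.
case: g1 => [[[t1 a1] b1] c1]; case: g2 => [[[t2 a2] b2] c2] /=.
move=> /and3P [ab1 ac1 bc1] /and3P [ab2 ac2 bc2] [Et Ea Eb Ec].
have D1 : dist3 (gp t1 c1 a1) (gp t1 c1 b1) (gp t1 c1 c1) by rewrite /dist3 !perm_neq.
have D2 : dist3 (gp t2 c2 a2) (gp t2 c2 b2) (gp t2 c2 c2) by rewrite /dist3 !perm_neq.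
have [_ _ _ _ i1] := third_spec D1.
have [_ _ _ _ i2] := third_spec D2.
have Ed : gp t1 c1 c1 = gp t2 c2 c2.
  by rewrite -i1 -i2 Ec Ea Eb.
case: (glue_invol tau t1 c1) => g1 p1.
case: (glue_invol tau t2 c2) => g2 p2.
have Et1 : t1 = t2 by rewrite -g1 -g2 Et Ed.
subst t2.
have Ep : gp t1 c1 = gp t1 c2.
  by apply: invg_inj; rewrite -p1 -p2 Et Ed.
have Ec' : c1 = c2 by apply: (@perm_inj _ (gp t1 c1)); rewrite {2}Ep.
subst c2.
by rewrite (perm_inj Ea) (perm_inj Eb).
Qed.

Lemma orbit_valid (T : finType) (gt : T -> 'I_4 -> T) (gp : T -> 'I_4 -> {perm 'I_4}) f g :
  valid_flag f -> g \in fingraph.orbit (flagnext gt gp) f -> valid_flag g.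
Proof.
move=> vf /trajectP [i _ ->]; elim: i => //= i IH.
exact: valid_next.
Qed.

Lemma relator_even (T : finType) (gt : T -> 'I_4 -> T) (gp : T -> 'I_4 -> {perm 'I_4})
  (veer : T -> {set 'I_4} -> bool) (tau : is_veering gt gp veer) f :
  valid_flag f -> odd (count (hst gt gp veer) (relator gt gp f)) = false.
Proof.
move=> vf.
set o := fingraph.orbit (flagnext gt gp) f.
have vo : {in o, forall g, valid_flag g} by move=> g; apply: orbit_valid.
have io : {in o &, injective (flagnext gt gp)}.
  by move=> x y xo yo; apply: (next_inj tau); apply: vo.
have cyc : iter (fingraph.order (flagnext gt gp) f) (flagnext gt gp) f = f.
  exact: ((orbitPcycle 5 4).1 io).
have pe : perm_eq (map (flagnext gt gp) o) o.
  rewrite /o /fingraph.orbit map_traject.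
  move: cyc; case E: (fingraph.order _ f) => [|n] cyc.
    by [].
  rewrite -(perm_cons f).
  have -> : f :: traject (flagnext gt gp) (flagnext gt gp f) n.+1 =
            traject (flagnext gt gp) f n.+2 by [].
  by rewrite trajectSr cyc perm_rcons.
rewrite /relator count_map.
rewrite (eq_in_count (a2 := fun g => Kf veer g (+) Kf veer (flagnext gt gp g))); last first.
  by move=> g go; rewrite /= (flag_id tau (vo g go)).
rewrite count_xor -(count_map (flagnext gt gp) (Kf veer)) (seq.permP pe).
by rewrite addbb.
Qed.

Definition Phi (T : finType) (gt : T -> 'I_4 -> T) (gp : T -> 'I_4 -> {perm 'I_4})
  (veer : T -> {set 'I_4} -> bool) (s : seq (T * 'I_4)) := odd (count (hst gt gp veer) s).

Lemma hst_inv (T : finType) (gt : T -> 'I_4 -> T) (gp : T -> 'I_4 -> {perm 'I_4})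
  (veer : T -> {set 'I_4} -> bool) (tau : is_veering gt gp veer) x :
  hst gt gp veer (inv_step gt gp x) = hst gt gp veer x.
Proof.
rewrite /hst /inv_step /=.
case: (glue_invol tau x.1 x.2) => -> ->; rewrite permK.
by rewrite addbC.
Qed.

Lemma hstep_inv (T : finType) (gt : T -> 'I_4 -> T) (gp : T -> 'I_4 -> {perm 'I_4})
  (veer : T -> {set 'I_4} -> bool) (tau : is_veering gt gp veer) p q :
  hstep gt gp p q -> Phi gt gp veer p.2 = Phi gt gp veer q.2.
Proof.
case=> _ _ [[x [s [-> ->]]] | [[s1 [s2 [x [_ [-> ->]]]]] | [s1 [s2 [f [vf [_ [-> ->]]]]]]]].
- by rewrite /Phi /= -cats1 count_cat /= addn0 addnC.
- rewrite /Phi !count_cat /= (hst_inv tau) !oddD.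
  by case: (hst gt gp veer x); case: (odd (count _ s1)); case: (odd (count _ s2)).
- by rewrite /Phi !count_cat !oddD (relator_even tau vf).
Qed.

Lemma veer_comp (T : finType) (gt : T -> 'I_4 -> T) (gp : T -> 'I_4 -> {perm 'I_4})
  (veer : T -> {set 'I_4} -> bool) (tau : is_veering gt gp veer) t (i : 'I_4) :
  ~~ topslot i -> veer t (~: [set i; l0]) = (nat_of_ord i == 1).
Proof.
case: (veer_sides tau t) => h01 h23 h12 h30.
case: (ord4 i) => -> ti; rewrite ?vl1 ?vl3 /=.
- by move: ti; rewrite /topslot -[val l0]/(nat_of_ord l0) vl0.
- have -> : ~: [set l1; l0] = [set l2; l3].
    apply/setP => k; rewrite !inE; case: (ord4 k) => ->; rewrite -!ordeqE ?vl0 ?vl1 ?vl2 ?vl3 //.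
  exact: h23.
- by move: ti; rewrite /topslot -[val l2]/(nat_of_ord l2) vl2.
- have -> : ~: [set l3; l0] = [set l1; l2].
    apply/setP => k; rewrite !inE; case: (ord4 k) => ->; rewrite -!ordeqE ?vl0 ?vl1 ?vl2 ?vl3 //.
  exact: negbTE.
Qed.

Lemma anti_pair (T : finType) (gt : T -> 'I_4 -> T) (gp : T -> 'I_4 -> {perm 'I_4})
  (veer : T -> {set 'I_4} -> bool) (tau : is_veering gt gp veer) (x y : T * 'I_4) :
  topslot x.2 -> topslot y.2 -> y.1 = gt x.1 x.2 ->
  antibranching gp veer x y = sigt veer (gt x.1 x.2) (gp x.1 x.2 x.2) (+) sigt veer y.1 y.2.
Proof.
move=> tx ty e.
have bi : ~~ topslot (gp x.1 x.2 x.2) by rewrite (glue_coor tau) tx.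
rewrite /antibranching /Aface e (veer_comp tau _ bi) /sigt /vtop.
set i := gp x.1 x.2 x.2 in bi *.
set vt := veer (gt x.1 x.2) [set l1; l3].
have -> : (y.2 == (if (nat_of_ord i == 1) == vt then l0 else l2)) =
          (nat_of_ord y.2 == if (nat_of_ord i == 1) == vt then 0 else 2).
  by case: ((nat_of_ord i == 1) == vt); rewrite -ordeqE ?vl0 ?vl2.
have := allP C_anti_ok _ (inI4 i) => /allP/(_ _ (inI4 y.2)) /allP/(_ _ (inB2 vt)).
by move/implyP/(_ bi)/implyP/(_ (ltn_ord i))/implyP/(_ ty)/eqP.
Qed.

Lemma walk_cons (T : finType) (gt : T -> 'I_4 -> T) v x s w :
  walk gt v (x :: s) = Some w -> x.1 = v /\ walk gt (gt x.1 x.2) s = Some w.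
Proof. by rewrite /=; case: eqP. Qed.

Lemma dir_count (T : finType) (gt : T -> 'I_4 -> T) (gp : T -> 'I_4 -> {perm 'I_4})
  (veer : T -> {set 'I_4} -> bool) (tau : is_veering gt gp veer) (w : T) (z : T * 'I_4) :
  topslot z.2 -> z.1 = w -> forall s x v, walk gt v (x :: s) = Some w ->
  all (fun u : T * 'I_4 => topslot u.2) (x :: s) ->
  odd (count (fun xy => antibranching gp veer xy.1 xy.2) (zip (x :: s) (rcons s z))) =
  odd (count (fun u => sigt veer (gt u.1 u.2) (gp u.1 u.2 u.2)) (x :: s))
  (+) odd (count (fun u => sigt veer u.1 u.2) (rcons s z)).
Proof.
move=> tz zw; elim=> [|y s IH] x v /walk_cons [_ W] /andP [tx ts].
- move: W => /= [W].
  rewrite /= !addn0 !oddb (anti_pair tau tx tz) //.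
  by rewrite zw W.
- have [ey W'] := walk_cons W.
  have [ty _] := andP ts.
  rewrite [zip _ _]/= [count _ (_ :: _)]/= oddD oddb (IH _ _ W ts).
  rewrite [count _ (x :: _)]/= [count _ (rcons (y :: s) z)]/= !oddD !oddb (anti_pair tau tx ty ey).
  set A := sigt veer (gt x.1 x.2) _. set B := sigt veer y.1 y.2.
  set C := sigt veer (gt y.1 y.2) _. set D := odd (count _ s).
  set E := odd (count _ (rcons s z)).
  by case: A; case: B; case: C; case: D; case: E.
Qed.

Lemma directed_parity (T : finType) (gt : T -> 'I_4 -> T) (gp : T -> 'I_4 -> {perm 'I_4})
  (veer : T -> {set 'I_4} -> bool) (tau : is_veering gt gp veer) c :
  directed_cycle gt c -> odd (n_antibranching gp veer c.2) = Phi gt gp veer c.2.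
Proof.
case: c => v [|x s] /=; first by case/and3P.
case/and3P => _ tall /eqP cl.
have [xv _] := walk_cons cl.
have tx : topslot x.2 by case/andP: tall.
rewrite /n_antibranching rot1_cons.
rewrite (dir_count tau tx xv cl tall).
rewrite /Phi /hst (count_xor (fun u => sigt veer u.1 u.2) (fun u => sigt veer (gt u.1 u.2) (gp u.1 u.2 u.2))).
rewrite -cats1 count_cat /= addn0 addnC.
by rewrite addbC (addnC (sigt veer x.1 x.2)).
Qed.

Theorem mainTheorem7 (T : finType) (gt : T -> 'I_4 -> T)
  (gp : T -> 'I_4 -> {perm 'I_4}) (veer : T -> {set 'I_4} -> bool)
  (tau : is_veering gt gp veer) (c1 c2 : T * seq (T * 'I_4)) :
  directed_cycle gt c1 -> directed_cycle gt c2 ->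
  free_homotopic gt gp c1 c2 ->
  odd (n_antibranching gp veer c1.2) = odd (n_antibranching gp veer c2.2).
Proof.
move=> d1 d2 H.
rewrite (directed_parity tau d1) (directed_parity tau d2).
elim: H {d1 d2} => [p q hs | p | p q _ IH | p q r _ IH1 _ IH2].
- exact: (hstep_inv tau hs).
- by [].
- by rewrite IH.
- by rewrite IH1 IH2.
Qed.
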